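(* Let $\lambda\neq0$ be real and $n,k\ge0$ integers. Then $$\sum_{j=0}^{n}\binom{n+k}{j}S_{2,\lambda}^{[2]}(n-j+k,2k)\,\beta_{j,\lambda}^{(k)}=\binom{n+k}{k}\sum_{j=0}^{k}\binom{k}{j}(-1)^{k-j}\beta_{n,\lambda}^{(k-j)}.$$
   Context: For real $\lambda\neq0$, $(x)_{0,\lambda}=1$, $(x)_{n,\lambda}=x(x-\lambda)\cdots(x-(n-1)\lambda)$ for $n\ge1$; $e_{\lambda}(t)=\sum_{k\ge0}(1)_{k,\lambda}\frac{t^k}{k!}=(1+\lambda t)^{1/\lambda}$ (formal power series). The $2$-truncated degenerate Stirling numbers of the second kind: for $k\ge0$, $\frac{1}{k!}(e_\lambda(t)-1-t)^k=\sum_{n\ge 2k}S^{[2]}_{2,\lambda}(n,2k)\frac{t^n}{n!}$, with $S^{[2]}_{2,\lambda}(n,2k)=0$ for $0\le n<2k$. The degenerate Bernoulli numbers of order $\alpha$ (a nonnegative integer here): $\big(\frac{t}{e_\lambda(t)-1}\big)^\alpha=\sum_{n\ge0}\beta^{(\alpha)}_{n,\lambda}\frac{t^n}{n!}$; in particular $\beta^{(0)}_{n,\lambda}=1$ if $n=0$ and $0$ otherwise. *)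

(* Defs.v *)
(* Formal power series over a real field are represented by
   their coefficient sequences  nat -> R  (coefficient of t^n, NOT divided by n!). *)
From mathcomp Require Import all_boot all_order all_algebra.
Set Implicit Arguments. Unset Strict Implicit. Unset Printing Implicit Defensive.
Import Order.TTheory GRing.Theory Num.Theory.
Local Open Scope ring_scope.

Section Defs.
Variable R : realFieldType.

Definition dfall (lam x : R) (n : nat) : R := \prod_(i < n) (x - i%:R * lam).

Definition fps_mul (a b : nat -> R) : nat -> R :=
  fun n => \sum_(i < n.+1) a i * b (n - i)%N.

Definition fps_one : nat -> R := fun n => (n == 0%N)%:R.

Definition fps_exp (a : nat -> R) (k : nat) : nat -> R := iter k (fps_mul a) fps_one.

Fixpoint fps_inv_seq (g : nat -> R) (n : nat) : seq R :=
  match n with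
  | 0%N => [:: (g 0%N)^-1]
  | m.+1 => let s := fps_inv_seq g m in
            rcons s (- (g 0%N)^-1 * \sum_(i < m.+1) g i.+1 * nth 0 s (m - i)%N)
  end.
Definition fps_inv (g : nat -> R) : nat -> R := fun n => nth 0 (fps_inv_seq g n) n.

(* e_lambda(t) = sum_k (1)_{k,lambda} t^k / k! *)
Definition elam (lam : R) : nat -> R := fun k => dfall lam 1 k / (k`!)%:R.

Definition elam_m1t (lam : R) : nat -> R :=
  fun k => elam lam k - (k == 0%N)%:R - (k == 1%N)%:R.

(* 2-truncated degenerate Stirling numbers of the second kind S^{[2]}_{2,lambda}(n, 2k):
   (1/k!) (e_lambda(t) - 1 - t)^k = sum_n S(n,2k) t^n / n! *)
Definition S2trunc (lam : R) (n k : nat) : R :=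
  (n`!)%:R / (k`!)%:R * fps_exp (elam_m1t lam) k n.

(* (e_lambda(t) - 1)/t *)
Definition elam_m1_div_t (lam : R) : nat -> R := fun m => elam lam m.+1.

(* degenerate Bernoulli numbers of order alpha:
   (t/(e_lambda(t)-1))^alpha = sum_n beta^{(alpha)}_{n,lambda} t^n/n! *)
Definition dbern (lam : R) (alpha n : nat) : R :=
  (n`!)%:R * fps_exp (fps_inv (elam_m1_div_t lam)) alpha n.

End Defs.

(* Main.v *)
Require Import Defs.
From mathcomp Require Import all_boot all_order all_algebra.
From mathcomp Require Import ring zify.
Set Implicit Arguments. Unset Strict Implicit.
Import Order.TTheory GRing.Theory Num.Theory.
Local Open Scope ring_scope.

Section Aux.
Variable R : realFieldType.

Definition trunc (N : nat) (a : nat -> R) : {poly R} := \poly_(i < N.+1) a i.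

Lemma trunc_coef N a i : (i <= N)%N -> (trunc N a)`_i = a i.
Proof. by move=> H; rewrite /trunc coef_poly ltnS H. Qed.

Definition eqN (N : nat) (p q : {poly R}) := forall i, (i <= N)%N -> p`_i = q`_i.

Lemma eqN_mul N p p' q q' : eqN N p p' -> eqN N q q' -> eqN N (p * q) (p' * q').
Proof.
move=> Hp Hq i Hi; rewrite !coefM; apply: eq_bigr => j _.
have Hj : (j <= N)%N by apply: leq_trans Hi; rewrite -ltnS.
rewrite Hp // Hq //; apply: leq_trans Hi; exact: leq_subr.
Qed.

Lemma eqN_exp N p q k : eqN N p q -> eqN N (p ^+ k) (q ^+ k).
Proof.
move=> H; elim: k => [|k IH]; first by move=> i _; rewrite !expr0.
by rewrite !exprS; apply: eqN_mul.
Qed.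

Lemma eqN_trans N p q r : eqN N p q -> eqN N q r -> eqN N p r.
Proof. by move=> H1 H2 i Hi; rewrite H1 // H2. Qed.

Lemma fps_mul_coef N (a b : nat -> R) (p q : {poly R}) :
  (forall i, (i <= N)%N -> a i = p`_i) -> (forall i, (i <= N)%N -> b i = q`_i) ->
  forall i, (i <= N)%N -> fps_mul a b i = (p * q)`_i.
Proof.
move=> Ha Hb i Hi; rewrite /fps_mul coefM; apply: eq_bigr => j _.
have Hj : (j <= N)%N by apply: leq_trans Hi; rewrite -ltnS.
rewrite Ha // Hb //; apply: leq_trans Hi; exact: leq_subr.
Qed.

Lemma fps_exp_coef N (a : nat -> R) (p : {poly R}) k :
  (forall i, (i <= N)%N -> a i = p`_i) ->
  forall i, (i <= N)%N -> fps_exp a k i = (p ^+ k)`_i.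
Proof.
move=> Ha; elim: k => [|k IH] i Hi.
  by rewrite expr0 coef1 /fps_exp /= /fps_one.
rewrite exprS -(fps_mul_coef Ha IH Hi); by [].
Qed.

Lemma size_fps_inv_seq (g : nat -> R) n : size (fps_inv_seq g n) = n.+1.
Proof. by elim: n => [|n IH] //=; rewrite size_rcons IH. Qed.

Lemma nth_fps_inv_seq (g : nat -> R) n m : (m <= n)%N -> nth 0 (fps_inv_seq g n) m = fps_inv g m.
Proof.
elim: n => [|n IH] Hm.
  by move: Hm; rewrite leqn0 => /eqP ->.
case: (ltngtP m n.+1) Hm => // [Hlt|->] _; last by [].
rewrite /= nth_rcons size_fps_inv_seq Hlt; exact: IH.
Qed.

Lemma fps_inv_S (g : nat -> R) m : fps_inv g m.+1 =
  - (g 0%N)^-1 * \sum_(i < m.+1) g i.+1 * fps_inv g (m - i)%N.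
Proof.
rewrite {1}/fps_inv /= nth_rcons size_fps_inv_seq ltnn eqxx.
congr (_ * _); apply: eq_bigr => i _; rewrite nth_fps_inv_seq //; exact: leq_subr.
Qed.

Lemma fps_inv_mul (g : nat -> R) : g 0%N = 1 -> forall n, fps_mul g (fps_inv g) n = (n == 0%N)%:R.
Proof.
move=> g0 [|m].
  by rewrite /fps_mul big_ord1 /fps_inv /= g0 invr1 mulr1.
rewrite /fps_mul big_ord_recl subn0 fps_inv_S g0 invr1 mulN1r mul1r.
under [X in _ + X]eq_bigr => i _ do rewrite lift0 subSS.
by rewrite addNr.
Qed.

End Aux.

Theorem theorem7 (R : realFieldType) (lam : R) (hlam : lam != 0) (n k : nat) :
  \sum_(j < n.+1) ('C(n + k, j))%:R * S2trunc lam (n - j + k) k * dbern lam k j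
  = ('C(n + k, k))%:R *
    \sum_(j < k.+1) ('C(k, j))%:R * (-1) ^+ (k - j) * dbern lam (k - j) n.
Proof.
set G := elam_m1_div_t lam; set E := elam_m1t lam; set Bs := fps_inv G.
have G0 : G 0%N = 1.
  by rewrite /G /elam_m1_div_t /elam /dfall big_ord1 /= mul0r subr0 divr1.
have E0 : E 0%N = 0.
  by rewrite /E /elam_m1t /elam /dfall big_ord0 /= divr1 subrr subr0.
have ES : forall i, E i.+1 = G i - (i == 0%N)%:R.
  by move=> i; rewrite /E /elam_m1t /= subr0.
set N := (n + k)%N.
set e := trunc N E; set g := trunc N G; set b := trunc N Bs.
have He : eqN N e ('X * (g - 1)).
  move=> [|i] Hi; rewrite coefXM /= /e trunc_coef //.
  rewrite ES coefB coef1 /g trunc_coef //; exact: ltnW.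
have Hgb : eqN N ((g - 1) * b) (1 - b).
  move=> i Hi; rewrite mulrBl mul1r !coefB; congr (_ - _).
  rewrite coef1 -(fps_inv_mul G0) /Bs.
  by symmetry; apply: (fps_mul_coef (N:=N)) => // j Hj; rewrite trunc_coef.
have Heb : eqN N (e ^+ k * b ^+ k) ('X ^+ k * (1 - b) ^+ k).
  rewrite -exprMn -exprMn; apply: eqN_exp.
  apply: (eqN_trans (q := 'X * (g - 1) * b)); first by apply: eqN_mul.
  by rewrite -mulrA; apply: eqN_mul.
have Hek : forall i, (i < k)%N -> (e ^+ k)`_i = 0.
  move=> i Hi; have := eqN_exp k He; rewrite exprMn => H.
  rewrite H; last by rewrite /N; lia.
  by rewrite coefXnM Hi.
have Hb : forall a i, (i <= N)%N -> fps_exp Bs a i = (b ^+ a)`_i.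
  by move=> a i Hi; apply: (fps_exp_coef (N:=N)) => // j Hj; rewrite trunc_coef.
have HE : forall i, (i <= N)%N -> fps_exp E k i = (e ^+ k)`_i.
  by move=> i Hi; apply: (fps_exp_coef (N:=N)) => // j Hj; rewrite trunc_coef.
have key : \sum_(j < n.+1) (b ^+ k)`_j * (e ^+ k)`_(N - j) = ((1 - b) ^+ k)`_n.
  have := Heb N (leqnn N); rewrite coefXnM.
  have -> : (N < k)%N = false by rewrite /N; lia.
  have -> : (N - k = n)%N by rewrite /N; lia.
  move=> <-; rewrite mulrC coefM.
  rewrite (big_ord_widen N.+1 (fun j => (b ^+ k)`_j * (e ^+ k)`_(N - j))); last by rewrite /N; lia.
  rewrite big_mkcond; apply: eq_bigr => [[j Hj]] _ /=.
  case: ifP => // H; rewrite Hek ?mulr0 //; rewrite /N in Hj *; lia.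
have kf0 : (k`!)%:R != 0 :> R by rewrite pnatr_eq0 -lt0n fact_gt0.
have Hbin : ('C(N, k))%:R * (n`!)%:R = (N`!)%:R / (k`!)%:R :> R.
  rewrite -(@bin_fact N k); last by rewrite /N leq_addl.
  have -> : (N - k = n)%N by rewrite /N; lia.
  rewrite !natrM; field; exact: kf0.
transitivity ((N`!)%:R / (k`!)%:R * ((1 - b) ^+ k)`_n).
  rewrite -key mulr_sumr; apply: eq_bigr => j _.
  have Hj : (j <= n)%N by rewrite -ltnS.
  rewrite /S2trunc /dbern HE; last by rewrite /N; lia.
  rewrite Hb; last by rewrite /N; lia.
  have -> : (n - j + k = N - j)%N by rewrite /N; lia.
  rewrite -(@bin_fact N j); last by rewrite /N; lia.
  rewrite !natrM; ring.
rewrite -Hbin -mulrA; congr (_ * _).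
rewrite addrC exprDn coef_sum mulr_sumr; apply: eq_bigr => j _.
rewrite /dbern [(- b) ^+ _]exprNn expr1n mulr1 coefMn Hb; last by rewrite /N leq_addr.
have -> : ((-1) ^+ (k - j) * b ^+ (k - j))`_n = (-1) ^+ (k - j) * (b ^+ (k - j))`_n.
  by rewrite -signr_odd -[in RHS]signr_odd; case: (odd _); rewrite /= ?expr0 ?expr1 ?mul1r ?mulN1r ?coefN.
rewrite -mulr_natl; ring.
Qed.
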